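(* Let $\langle\mathbf{B},\mathbf{I}\rangle$ be a Bochvar system. Let $\mathbb{A}_{\mathbb{B}}$ be the semilattice direct system with: - index join-semilattice $I$ ordered dually to $\mathbf{B}$, with least element $1$; - fibres $\mathbf{B}/[i)$ for $i\in I$; - maps $p_{ij}(a/[i))=a/[j)$ for $j\le_{\mathbf{B}}i$. Then the Płonka sum of $\mathbb{A}_{\mathbb{B}}$, an algebra of type $\langle\wedge,\vee,\neg,0,1\rangle$, is the $\{\wedge,\vee,\neg,0,1\}$-reduct of a unique Bochvar algebra. In other words, there is exactly one unary operation $J_2$ on it making it a Bochvar algebra.
   Context: A Bochvar system is a pair $\langle\mathbf{B},\mathbf{I}\rangle$ where $\mathbf{B}$ is a Boolean algebra and $I\subseteq B$ contains $1$ and is closed under $\wedge$. $[i)$ is the principal filter of $\mathbf{B}$ generated by $i$. $\mathbf{B}/[i)$ is the quotient by $\{\langle a,b\rangle:(\neg a\vee b)\wedge(\neg b\vee a)\in[i)\}$. Płonka sum of a semilattice direct system $\langle\{\mathbf{A}_i\},\langle I,\vee,i_0\rangle,\{p_{ij}\}\rangle$: the universe is the disjoint union of the $A_i$. Operations are $g(a_1,\dots,a_n)=g^{\mathbf{A}_k}(p_{i_1k}(a_1),\dots,p_{i_nk}(a_n))$ for $a_m\in A_{i_m}$ and $k=\bigvee i_m$; constants are those of $\mathbf{A}_{i_0}$. $\mathbf{WK}^e$ is the three-element algebra on $\{0,\tfrac12,1\}$ of type $\langle\wedge,\vee,\neg,J_2,0,1\rangle$. Its operations are: - $\neg$ swaps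 $0,1$ and fixes $\tfrac12$; - $\wedge,\vee$ are Boolean on $\{0,1\}$ and return $\tfrac12$ whenever some argument is $\tfrac12$; - $J_2(1)=1$ and $J_2(\tfrac12)=J_2(0)=0$. Bochvar algebras are the members of $ISP(\mathbf{WK}^e)$. *)

(* Defs.v *)
From HB Require Import structures.
From mathcomp Require Import all_boot all_order generic_quotient.

Set Implicit Arguments.
Unset Strict Implicit.
Unset Printing Implicit Defensive.

Import Order.Theory.
Local Open Scope order_scope.
Local Open Scope quotient_scope.

Inductive WK := wk0 | wkh | wk1.   (* 0, 1/2, 1 *)

Definition wk_neg (x : WK) : WK :=
  match x with wk0 => wk1 | wkh => wkh | wk1 => wk0 end.

Definition wk_and (x y : WK) : WK :=
  match x, y with
  | wkh, _ | _, wkh => wkh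
  | wk1, wk1 => wk1
  | _, _ => wk0
  end.

Definition wk_or (x y : WK) : WK :=
  match x, y with
  | wkh, _ | _, wkh => wkh
  | wk0, wk0 => wk0
  | _, _ => wk1
  end.

Definition wk_J2 (x : WK) : WK :=
  match x with wk1 => wk1 | _ => wk0 end.

(* An algebra (A; meet, join, neg, J, zero, one) of type
   <and, or, neg, J2, 0, 1> is a Bochvar algebra iff it belongs to
   ISP(WK^e): it embeds (injective homomorphism) into a direct power
   X -> WK^e for some index set X. *)
Definition is_bochvar (A : Type) (meet join : A -> A -> A) (neg J : A -> A)
  (zero one : A) : Prop :=
  exists (X : Type) (h : A -> X -> WK),
    injective h /\
    (forall a b, h (meet a b) = fun x => wk_and (h a x) (h b x)) /\
    (forall a b, h (join a b) = fun x => wk_or (h a x) (h b x)) /\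
    (forall a, h (neg a) = fun x => wk_neg (h a x)) /\
    (forall a, h (J a) = fun x => wk_J2 (h a x)) /\
    h zero = (fun _ => wk0) /\
    h one = (fun _ => wk1).

Section Fibre.
Context {disp : Order.disp_t} {B : ctbDistrLatticeType disp}.

(* <a,b> in the congruence of [i)  iff  (~a \/ b) /\ (~b \/ a) \in [i) *)
Definition fcong (i : B) : rel B :=
  fun a b => i <= (~` a `|` b) `&` (~` b `|` a).

Lemma fcong_refl i : reflexive (fcong i).
Proof. by move=> a; rewrite /fcong joinCx meetxx lex1. Qed.

Lemma fcong_sym i : symmetric (fcong i).
Proof. by move=> a b; rewrite /fcong meetC. Qed.

Lemma fcong_aux (a b c : B) : (~` a `|` b) `&` (~` b `|` c) <= ~` a `|` c.
Proof.
rewrite meetUl; apply: leU2; first exact: leIl.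
by rewrite meetUr meetxC join0x leIr.
Qed.

Lemma fcong_trans i : transitive (fcong i).
Proof.
move=> b a c; rewrite /fcong !lexI => /andP[h1 h2] /andP[h3 h4].
apply/andP; split.
  apply: le_trans (fcong_aux a b c); by rewrite lexI h1 h3.
apply: le_trans (fcong_aux c b a); by rewrite lexI h4 h2.
Qed.

Canonical fcong_equiv (i : B) :=
  EquivRel (fcong i) (@fcong_refl i) (@fcong_sym i) (@fcong_trans i).

Definition fibre (i : B) := {eq_quot fcong_equiv i}.

Definition fmeet i (x y : fibre i) : fibre i := \pi_(fibre i) (repr x `&` repr y).
Definition fjoin i (x y : fibre i) : fibre i := \pi_(fibre i) (repr x `|` repr y).
Definition fneg i (x : fibre i) : fibre i := \pi_(fibre i) (~` repr x).
Definition fzero i : fibre i := \pi_(fibre i) \bot.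
Definition fone i : fibre i := \pi_(fibre i) \top.

Definition ptrans i j (x : fibre i) : fibre j := \pi_(fibre j) (repr x).

(* Index join-semilattice: I ordered dually to B, so i v_I j = i /\ j *)
(* (the join of the indices is the B-meet) and the least index is 1.  *)
Variable I : {pred B}.
Hypothesis I_meet : {in I &, forall i j, i `&` j \in I}.
Hypothesis I_top : \top \in I.

Definition Idx := {i : B | i \in I}.
Definition idx_join (i j : Idx) : Idx :=
  exist _ (val i `&` val j) (I_meet (valP i) (valP j)).
Definition idx_bot : Idx := exist _ \top I_top.

Definition plonka := {i : Idx & fibre (val i)}.

Definition pl_meet (x y : plonka) : plonka :=
  let k := idx_join (projT1 x) (projT1 y) in
  existT _ k (fmeet (ptrans (val k) (projT2 x)) (ptrans (val k) (projT2 y))).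
Definition pl_join (x y : plonka) : plonka :=
  let k := idx_join (projT1 x) (projT1 y) in
  existT _ k (fjoin (ptrans (val k) (projT2 x)) (ptrans (val k) (projT2 y))).
Definition pl_neg (x : plonka) : plonka :=
  existT _ (projT1 x) (fneg (projT2 x)).
Definition pl_zero : plonka := existT _ idx_bot (fzero (val idx_bot)).
Definition pl_one : plonka := existT _ idx_bot (fone (val idx_bot)).

End Fibre.

(* Main.v *)
Require Import Defs.
From HB Require Import structures.
From mathcomp Require Import all_boot all_order generic_quotient.
From mathcomp Require Import boolp classical_sets.
Set Implicit Arguments. Unset Strict Implicit. Unset Printing Implicit Defensive.
Import Order.Theory.
Local Open Scope quotient_scope.

Section BPI.
Context {disp : Order.disp_t} {B : ctbDistrLatticeType disp}.
Local Open Scope order_scope.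

Record hom (f : B -> bool) : Prop := Hom {
  homI : forall a b, f (a `&` b) = f a && f b;
  homU : forall a b, f (a `|` b) = f a || f b;
  homC : forall a, f (~` a) = ~~ f a;
  homT : f \top;
  homB : ~~ f \bot }.

Definition idl (S : set B) (c : B) : Prop :=
  [/\ forall x y, S x -> S y -> S (x `|` y),
      forall x y, S x -> y <= x -> S y & ~ S c].

Lemma lat1 (m1 m2 x : B) : (m1 `|` x) `&` (m2 `|` ~` x) <= m1 `|` m2.
Proof.
rewrite meetUl; apply: leU2; first exact: leIl.
by rewrite meetUr meetxC joinx0 leIr.
Qed.

Lemma lat2 (a b : B) : b <= (a `&` b) `|` ~` a.
Proof. by rewrite joinIl joinxC meet1x leUl. Qed.

Lemma bpi (c : B) : c != \bot -> exists f, hom f /\ f c.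
Proof.
move=> c0.
have Z : forall F : set (set B), (forall S, F S -> idl S c) -> total_on F subset ->
   idl (fun x => exists2 X, F X & X x) c.
  move=> F FP Ftot; split.
  - move=> x y [X FX Xx] [Y FY Yy].
    have [XY|YX] := Ftot _ _ FX FY.
      exists Y => //; have [YU _ _] := FP _ FY; exact: YU (XY _ Xx) Yy.
    exists X => //; have [XU _ _] := FP _ FX; exact: XU Xx (YX _ Yy).
  - move=> x y [X FX Xx] yx; exists X => //; have [_ XD _] := FP _ FX; exact: XD Xx yx.
  - by move=> [X FX Xc]; have [_ _ XC] := FP _ FX.
have [M [[MU MD Mc] Mmax]] := Zorn_bigcup Z.
have ext x : ~ M x -> exists m, (M m \/ m = \bot) /\ c <= m `|` x.
  move=> nMx.
  pose Mx y := exists m, (M m \/ m = \bot) /\ y <= m `|` x.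
  apply: contrapT => nc.
  apply: (Mmax Mx).
    split; first by move=> y My; exists y; split; [left|rewrite leUl].
    by move=> H; apply: nMx; apply: H; exists \bot; split; [right|rewrite join0x].
  split.
  - move=> y z [m1 [Hm1 y1]] [m2 [Hm2 z2]]; exists (m1 `|` m2); split.
      case: Hm1 => [Hm1|->]; last by rewrite join0x; case: Hm2; [left|right].
      case: Hm2 => [Hm2|->]; last by rewrite joinx0; left.
      by left; apply: MU.
    rewrite leUx; apply/andP; split.
      by apply: le_trans y1 _; apply: leU2 => //; exact: leUl.
    by apply: le_trans z2 _; apply: leU2 => //; exact: leUr.
  - by move=> y z [m [Hm ym]] zy; exists m; split => //; apply: le_trans zy ym.
  - by move=> [m [Hm cle]]; apply: nc; exists m.
have Mtop : ~ M \top by move=> Mt; apply: Mc; apply: MD Mt _; exact: lex1.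
have nboth x : M x -> M (~` x) -> False.
  by move=> M1 M2; apply: Mtop; rewrite -(joinxC x); apply: MU.
have dich x : M x \/ M (~` x).
  case: (pselect (M x)) => [|n1]; first by left.
  case: (pselect (M (~` x))) => [|n2]; first by right.
  have [m1 [Hm1 c1]] := ext _ n1.
  have [m2 [Hm2 c2]] := ext _ n2.
  have cm : c <= m1 `|` m2.
    apply: le_trans (lat1 m1 m2 x); by rewrite lexI c1 c2.
  exfalso; case: Hm1 => [Hm1|e1]; case: Hm2 => [Hm2|e2].
  - by apply: Mc; apply: MD cm; apply: MU.
  - by apply: Mc; apply: MD Hm1 _; rewrite e2 joinx0 in cm.
  - by apply: Mc; apply: MD Hm2 _; rewrite e1 join0x in cm.
  - by move: c0; rewrite e1 e2 joinx0 lex0 in cm; rewrite cm.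
exists (fun x => ~~ `[< M x >]); split; last by apply/negP => /asboolP.
split.
- move=> a b; apply/negP/idP.
  + move=> nab; apply/andP; split; apply/negP => /asboolP Ma; apply: nab; apply/asboolP;
     apply: MD Ma _; [exact: leIl|exact: leIr].
  + move=> /andP[/negP na /negP nb] /asboolP Mab; apply: nb; apply/asboolP.
    case: (dich a) => [Ma|Mna]; first by exfalso; apply: na; exact/asboolP.
    apply: MD (lat2 a b); exact: MU.
- move=> a b; apply/negP/idP.
  + move=> nab; apply: contraT; rewrite negb_or !negbK => /andP[/asboolP Ma /asboolP Mb].
    by case: nab; apply/asboolP; apply: MU.
  + move=> H /asboolP Mab; move: H; apply/negP; rewrite negb_or !negbK; apply/andP; split;
     apply/asboolP; apply: MD Mab _; [exact: leUl|exact: leUr].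
- move=> a; rewrite negbK; apply/idP/idP.
  + move=> /negP nMa; apply/asboolP; case: (dich a) => // Ma; exfalso; apply: nMa; exact/asboolP.
  + move=> /asboolP Ma; apply/negP => /asboolP; exact: nboth.
- by apply/negP => /asboolP.
- rewrite negbK; apply/asboolP; case: (dich \bot) => //; rewrite -(joinx0 (~` \bot)) joinCx //.
Qed.

Lemma hom_le f a b : hom f -> a <= b -> f a -> f b.
Proof. by move=> hf /meet_l <-; rewrite (homI hf) => /andP[]. Qed.

Lemma le_hom a b : (forall f, hom f -> f a -> f b) -> a <= b.
Proof.
move=> H; apply: contraT => nab.
have : a `&` ~` b != \bot.
  apply: contra nab => /eqP e.
  have -> : a = a `&` b.
    by rewrite -[LHS]meetx1 -(joinxC b) meetUr e joinx0.
  exact: leIr.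
move=> /bpi [f [hf fab]]; move: fab; rewrite (homI hf) (homC hf) => /andP[fa].
by rewrite (H f hf fa).
Qed.

Lemma eq_hom a b : (forall f, hom f -> f a = f b) -> a = b.
Proof.
move=> H; apply: le_anti; rewrite !le_hom // => f hf; by rewrite H.
Qed.

Lemma fcongP i a b : fcong i a b <-> forall f, hom f -> f i -> f a = f b.
Proof.
split.
  move=> H f hf fi; have := hom_le hf H fi.
  rewrite (homI hf) !(homU hf) !(homC hf).
  by case: (f a); case: (f b).
move=> H; apply: le_hom => f hf fi; rewrite (homI hf) !(homU hf) !(homC hf).
by rewrite (H f hf fi); case: (f b).
Qed.

Lemma pi_f f j w : hom f -> f j -> f (repr (\pi_(fibre j) w)) = f w.
Proof.
move=> hf fj; have : fcong j (repr (\pi_(fibre j) w)) w.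
  by apply/(eqquotP (fibre j)); rewrite reprK.
by move/fcongP => /(_ f hf fj).
Qed.

Variable I : {pred B}.
Hypothesis I_meet : {in I &, forall i j, i `&` j \in I}.
Hypothesis I_top : \top \in I.

Definition ev (f : B -> bool) (x : plonka I) : WK :=
  if f (val (projT1 x)) then (if f (repr (projT2 x)) then wk1 else wk0) else wkh.

Definition J0 (x : plonka I) : plonka I :=
  existT _ (idx_bot I_top) (\pi_(fibre \top) (repr (projT2 x) `&` val (projT1 x))).

Lemma ev_meet f x y : hom f -> ev f (pl_meet I_meet x y) = wk_and (ev f x) (ev f y).
Proof.
move=> hf; case: x => i a; case: y => j b; rewrite /ev /= (homI hf).
case fi: (f (val i)); case fj: (f (val j)); rewrite ?andbF //=; last by case: (f (repr a)).
have fk : f (val i `&` val j) by rewrite (homI hf) fi fj.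
rewrite /fmeet /ptrans !(pi_f _ hf fk) (homI hf) !(pi_f _ hf fk).
by case: (f (repr a)); case: (f (repr b)).
Qed.

Lemma ev_join f x y : hom f -> ev f (pl_join I_meet x y) = wk_or (ev f x) (ev f y).
Proof.
move=> hf; case: x => i a; case: y => j b; rewrite /ev /= (homI hf).
case fi: (f (val i)); case fj: (f (val j)); rewrite ?andbF //=; last by case: (f (repr a)).
have fk : f (val i `&` val j) by rewrite (homI hf) fi fj.
rewrite /fjoin /ptrans !(pi_f _ hf fk) (homU hf) !(pi_f _ hf fk).
by case: (f (repr a)); case: (f (repr b)).
Qed.

Lemma ev_neg f x : hom f -> ev f (pl_neg x) = wk_neg (ev f x).
Proof.
move=> hf; case: x => i a; rewrite /ev /=.
case fi: (f (val i)) => //=.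
by rewrite /fneg (pi_f _ hf fi) (homC hf); case: (f (repr a)).
Qed.

Lemma ev_J0 f x : hom f -> ev f (J0 x) = wk_J2 (ev f x).
Proof.
move=> hf; case: x => i a; rewrite /ev /= (homT hf) (pi_f _ hf (homT hf)) (homI hf).
by case: (f (val i)); case: (f (repr a)).
Qed.

Lemma ev_zero f : hom f -> ev f (pl_zero I_top) = wk0.
Proof.
by move=> hf; rewrite /ev /= (homT hf) /fzero (pi_f _ hf (homT hf)) (negbTE (homB hf)).
Qed.

Lemma ev_one f : hom f -> ev f (pl_one I_top) = wk1.
Proof.
by move=> hf; rewrite /ev /= (homT hf) /fone (pi_f _ hf (homT hf)) (homT hf).
Qed.

Lemma ev_inj x y : (forall f, hom f -> ev f x = ev f y) -> x = y.
Proof.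
case: x => i a; case: y => j b H.
have eij : val i = val j.
  apply: eq_hom => f hf; have := H f hf; rewrite /ev /=.
  by case: (f (val i)); case: (f (val j)); case: (f (repr a)); case: (f (repr b)).
have {eij} eij : i = j by apply: val_inj.
subst j; congr existT.
rewrite -[a]reprK -[b]reprK; apply/eqquotP; apply/fcongP => f hf fi.
have := H f hf; rewrite /ev /= fi.
by case: (f (repr a)); case: (f (repr b)).
Qed.

End BPI.

From Stdlib Require Import FunctionalExtensionality.
Unset Implicit Arguments.

Theorem theorem3p3 (disp : Order.disp_t) (B : ctbDistrLatticeType disp)
  (I : {pred B}) (I_top : (Order.top : B) \in I)
  (I_meet : {in I &, forall i j, Order.meet i j \in I}) :
  exists! J : plonka I -> plonka I,
    is_bochvar (pl_meet I_meet) (pl_join I_meet) (@pl_neg _ _ I) J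
      (pl_zero I_top) (pl_one I_top).
Proof.
exists (J0 I_top); split.
  exists {f : B -> bool | hom f}, (fun (x : plonka I) (f : {f : B -> bool | hom f}) => ev (proj1_sig f) x).
  split; first by move=> x y H; apply: ev_inj => f hf; exact: (congr1 (fun g => g (exist _ f hf)) H).
  split; first by move=> x y; apply: functional_extensionality => -[f hf]; exact: ev_meet.
  split; first by move=> x y; apply: functional_extensionality => -[f hf]; exact: ev_join.
  split; first by move=> x; apply: functional_extensionality => -[f hf]; exact: ev_neg.
  split; first by move=> x; apply: functional_extensionality => -[f hf]; exact: ev_J0.
  split; apply: functional_extensionality => -[f hf]; [exact: ev_zero|exact: ev_one].
move=> J' [X [h [hinj [hm [hj [hn [hJ [h0 h1]]]]]]]].
apply: functional_extensionality => x.
set u := J' x.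
have F1 : pl_join I_meet u (pl_neg u) = pl_one I_top.
  apply: hinj; rewrite hj hn /u hJ h1; apply: functional_extensionality => t.
  by case: (h x t).
have F2 : pl_meet I_meet u x = x.
  apply: hinj; rewrite hm /u hJ; apply: functional_extensionality => t.
  by case: (h x t).
have F3 : pl_meet I_meet (pl_neg u) (pl_neg x) = pl_neg x.
  apply: hinj; rewrite hm !hn /u hJ; apply: functional_extensionality => t.
  by case: (h x t).
have F4 v : pl_join I_meet v (pl_neg v) = pl_one I_top ->
    pl_meet I_meet v (pl_join I_meet x (pl_neg x)) = pl_join I_meet x (pl_neg x) ->
    pl_meet I_meet u v = u.
  move=> /(congr1 h) E1 /(congr1 h) E2.
  apply: hinj; rewrite hm /u hJ; apply: functional_extensionality => t.
  move: (congr1 (fun g => g t) E1) (congr1 (fun g => g t) E2).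
  rewrite hj hm hj !hn h1 /=.
  by case: (h x t); case: (h v t).
case: x @u F1 F2 F3 F4 => i a u F1 F2 F3 F4.
pose v : plonka I := existT _ (idx_bot I_top) (\pi_(fibre \top%O) (val i)).
have G4 := F4 v.
apply: ev_inj => f hf.
rewrite ev_J0 //.
have ev_v g : hom g -> ev g v = if g (val i) then wk1 else wk0.
  by move=> hg; rewrite /ev /= (homT hg) (pi_f _ hg (homT hg)).
have E1 := congr1 (ev f) F1; have E2 := congr1 (ev f) F2; have E3 := congr1 (ev f) F3.
rewrite ev_join // ev_neg // ev_one // in E1.
rewrite ev_meet // in E2.
rewrite ev_meet // !ev_neg // in E3.
have E4 : ev f (pl_meet I_meet u v) = ev f u.
  congr ev; apply: G4; apply: ev_inj => g hg;
    rewrite ?ev_meet ?ev_join ?ev_neg ?ev_one // ev_v // /ev /=;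
    by case: (g (val i)); case: (g (repr a)).
rewrite ev_meet // ev_v // in E4.
move: E1 E2 E3 E4; rewrite /ev /=.
by case: (f (val i)); case: (f (repr a)); case: (f (val (projT1 u))); case: (f (repr (projT2 u))).
Qed.
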